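(* In the setting of the context, at every iteration $n$ the search directions satisfy $\langle v_{n,j},J_{p^*}(v_{n,k})\rangle=0$ for all $1\le j<k\le N_n$.
   Context: $X$ is a real smooth, uniformly convex Banach space, $Y$ a real Banach space, $A:X\to Y$ bounded linear with adjoint $A^*$, $y\in\mathcal{R}(A)$. Fix $p,r\in(1,\infty)$, $p^*=p/(p-1)$. $J_p:X\to X^*$ is the duality mapping with gauge $t^{p-1}$, $J_{p^*}:X^*\to X$ the duality mapping of $X^*$ with gauge $t^{p^*-1}$ ($\langle J_{p^*}(v),v\rangle=\|v\|^{p^*}$, $\|J_{p^*}(v)\|=\|v\|^{p^*-1}$), $J_r^Y$ a single-valued selection of the duality mapping of $Y$ with gauge $t^{r-1}$. Method: choose $x_0$ with $J_p(x_0)\in\overline{\mathcal{R}(A^* )}$, fix $N\in\mathbb{N}$, $N_n=\min(N,n+1)$. For $n=0,1,\dots$: $w_n=Ax_n-y$; stop if $w_n=0$. Else $u_n=A^*J_r^Y(w_n)$. Let $s_n$ minimize $s\mapsto\|u_n-\sum_{i=1}^{N_{n-1}}s_iv_{n-1,i}\|^{p^*}_{X^*}$ (empty sum for $n=0$), set $v_{n,N_n}=u_n-\sum_k s_{n,k}v_{n-1,k}$; $v_{n,1},\dots,v_{n,N_n-1}$ are the last $N_n-1$ entries of the previous list $v_{n-1,1},\dots,v_{n-1,N_{n-1}}$, in order. With precursors $w^*_{n,k}$ ($v_{n,k}=A^*w^*_{n,k}$, built by the same linear combinations from $J_r^Y(w_n)$) and offsets $\beta_{n,k}=\langle w^*_{n,k},y\rangle$,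 $t_n$ minimizes $h_n(t)=\tfrac1{p^*}\|J_p(x_n)-\sum_k t_kv_{n,k}\|^{p^*}+\sum_k t_k\beta_{n,k}$ and $x_{n+1}=J_{p^*}(J_p(x_n)-\sum_k t_{n,k}v_{n,k})$. *)

(* Defs.v *)
From HB Require Import structures.
From mathcomp Require Import all_boot all_order all_algebra.
From mathcomp Require Import all_classical all_reals all_analysis.
Set Implicit Arguments. Unset Strict Implicit. Unset Printing Implicit Defensive.
Import Order.TTheory GRing.Theory Num.Theory.
Import numFieldNormedType.Exports.
Local Open Scope classical_set_scope.
Local Open Scope ring_scope.

Section Defs.
Context {R : realType}.

Definition is_dual (V : normedModType R) (f : V -> R) : Prop :=
  (forall (a : R) (x y : V), f (a *: x + y) = a * f x + f y) /\ continuous f.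

Definition dnorm (V : normedModType R) (f : V -> R) : R :=
  sup [set `|f x| | x in [set x : V | `|x| <= 1]].

Definition uniformly_convex (V : normedModType R) : Prop :=
  forall eps : R, 0 < eps <= 2 -> exists2 delta : R, 0 < delta &
    forall x y : V, `|x| <= 1 -> `|y| <= 1 -> eps <= `|x - y| ->
      `|(2^-1 : R) *: (x + y)| <= 1 - delta.

Definition smooth_space (V : normedModType R) : Prop :=
  forall x : V, x != 0 -> forall h : V,
    derivable (fun t : R => `|x + t *: h| : R^o) 0 1.

Definition bounded_linear (V W : normedModType R) (A : V -> W) : Prop :=
  (forall (a : R) (x y : V), A (a *: x + y) = a *: A x + A y) /\ continuous A.

(* duality mapping of V with gauge t^{q-1} (a single-valued selection):
   <J x, x> = ||x||^q and ||J x||_* = ||x||^{q-1} *)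
Definition duality_selection (V : normedModType R) (q : R) (J : V -> V -> R) :=
  forall x : V, is_dual (J x) /\ J x x = `|x| `^ q /\ dnorm (J x) = `|x| `^ (q - 1).

(* duality mapping J_{q} of V^* with values in V (reflexivity identifies V^** with V):
   <f, J f> = ||f||^q and ||J f|| = ||f||^{q-1} *)
Definition dual_duality_map (V : normedModType R) (q : R) (J : (V -> R) -> V) :=
  forall f : V -> R, is_dual f ->
    f (J f) = dnorm f `^ q /\ `|J f| = dnorm f `^ (q - 1).

End Defs.

(* N_n = min(N, n+1); number of directions at the previous step (N_{-1} := 0) *)
Definition Nn (N n : nat) : nat := minn N n.+1.
Definition Nprev (N n : nat) : nat := if n is n'.+1 then Nn N n' else 0%N.

(* Main.v *)
Require Import Defs.
From HB Require Import structures.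
From mathcomp Require Import all_boot all_order all_algebra.
From mathcomp Require Import all_classical all_reals all_analysis.
From mathcomp Require Import ring lra zify.
Import Order.TTheory GRing.Theory Num.Theory.
Import numFieldNormedType.Exports.
Local Open Scope classical_set_scope.
Local Open Scope ring_scope.

Section L.
Context {R : realType} {V : normedModType R}.
Implicit Types (f g : V -> R).

Lemma dual0 {f} : is_dual f -> f 0 = 0.
Proof. move=> [L _]; have := L 1 0 0; rewrite scaler0 addr0 mul1r => h; lra. Qed.

Lemma dualZ {f} a x : is_dual f -> f (a *: x) = a * f x.
Proof. move=> hf; have := hf.1 a x 0; rewrite addr0 dual0 // addr0. by []. Qed.

Lemma dualD {f} x y : is_dual f -> f (x + y) = f x + f y.
Proof. move=> hf; have := hf.1 1 x y; by rewrite scale1r mul1r. Qed.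

Lemma dualN {f} x : is_dual f -> f (- x) = - f x.
Proof. move=> hf; by rewrite -scaleN1r dualZ // mulN1r. Qed.

Lemma dualB {f} x y : is_dual f -> f (x - y) = f x - f y.
Proof. move=> hf; by rewrite dualD // dualN. Qed.

Lemma dual_bounded {f} : is_dual f -> exists2 C, 0 <= C & forall x, `|f x| <= C * `|x|.
Proof.
move=> hf; have c0 := hf.2 0.
have := @cvgr_dist_lt _ _ _ _ _ _ _ c0 1 ltr01.
rewrite dual0 // => H; have {H} : \forall t \near (0:V), `|0 - f t| < 1 by apply: H; exact: _.
move=> /(@nbhs_norm0P R V) [e /= e0 He].
exists (2 / e); first by rewrite divr_ge0 // ltW.
move=> x; have [->|x0] := eqVneq x 0; first by rewrite dual0 // !normr0 mulr0.
have nx : 0 < `|x| by rewrite normr_gt0.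
set a := e / 2 / `|x|.
have a0 : 0 < a by rewrite /a !divr_gt0.
have : `|a *: x| < e.
  rewrite normrZ gtr0_norm // /a divfK ?gt_eqF //; lra.
move=> /He /=; rewrite sub0r normrN dualZ // normrM gtr0_norm // => h.
have -> : 2 / e * `|x| = a^-1.
  rewrite /a !invfM !invrK; field; by rewrite !gt_eqF.
by rewrite -(ler_pM2l a0) mulfV ?gt_eqF // ltW.
Qed.

Lemma dnorm_has_sup {f} : is_dual f -> has_sup [set `|f x| | x in [set x : V | `|x| <= 1]].
Proof.
move=> hf; have [C C0 HC] := dual_bounded hf; split.
  by exists `|f 0|, 0 => //=; rewrite normr0.
exists C => _ [x /= x1 <-]; apply: le_trans (HC x) _.
by rewrite -{2}(mulr1 C) ler_wpM2l.
Qed.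

Lemma dnorm_ge0 {f} : is_dual f -> 0 <= dnorm f.
Proof.
move=> hf; apply: (sup_upper_bound (dnorm_has_sup hf)); exists 0 => /=.
  by rewrite normr0 ler01.
by rewrite dual0 // normr0.
Qed.

Lemma dnorm_ub {f} x : is_dual f -> `|f x| <= dnorm f * `|x|.
Proof.
move=> hf; have [->|x0] := eqVneq x 0; first by rewrite dual0 // !normr0 mulr0.
have nx : 0 < `|x| by rewrite normr_gt0.
have h : `|x|^-1 * `|f x| <= dnorm f.
  apply: (sup_upper_bound (dnorm_has_sup hf)); exists (`|x|^-1 *: x) => /=.
    by rewrite normrZ gtr0_norm ?invr_gt0 // mulVf ?gt_eqF.
  by rewrite dualZ // normrM gtr0_norm ?invr_gt0.
have ix : 0 < `|x|^-1 by rewrite invr_gt0.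
by rewrite -(ler_pM2l ix) mulrCA mulVf ?gt_eqF // mulr1.
Qed.

Lemma dnorm_adh {f e} : is_dual f -> 0 < e -> exists x, `|x| <= 1 /\ dnorm f - e < f x.
Proof.
move=> hf e0; have [_ [x /= x1 <-] h] := sup_adherent e0 (dnorm_has_sup hf).
have [fx0|fx0] := leP 0 (f x).
  by exists x; split => //; rewrite ger0_norm in h.
exists (- x); split; first by rewrite normrN.
by rewrite dualN // ltr0_norm in h *.
Qed.

Lemma dual_comb f g c : is_dual f -> is_dual g -> is_dual (fun x => f x + c * g x).
Proof.
move=> hf hg; split.
  move=> a x y; rewrite hf.1 hg.1; ring.
move=> x; exact: (continuousD (hf.2 x) (continuousM (@cst_continuous _ _ c x) (hg.2 x))).
Qed.

Lemma dual_sum (r : seq nat) (c : nat -> R) (F : nat -> V -> R) :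
  (forall i, i \in r -> is_dual (F i)) -> is_dual (fun x => \sum_(i <- r) c i * F i x).
Proof.
elim: r => [|i r IH] H.
  split; first by move=> *; rewrite !big_nil; ring.
  by move=> x; under eq_fun do rewrite big_nil; exact: cst_continuous.
have h1 : is_dual (fun x => \sum_(i <- r) c i * F i x).
  apply: IH => j jr; apply: H; by rewrite inE jr orbT.
suff -> : (fun x => \sum_(j <- i :: r) c j * F j x) = (fun x => \sum_(j <- r) c j * F j x + c i * F i x).
  exact: dual_comb h1 (H i (mem_head _ _)).
apply: funext => x; by rewrite big_cons addrC.
Qed.

Lemma dual_combB f g c : is_dual f -> is_dual g -> is_dual (fun x => f x - c * g x).
Proof.
move=> hf hg; have := dual_comb _ _ (- c) hf hg.
suff -> : (fun x => f x - c * g x) = (fun x => f x + (- c) * g x) by [].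
by apply: funext => x; rewrite mulNr.
Qed.

Lemma key_pos f g x0 (M : R) : uniformly_convex V -> is_dual f -> is_dual g ->
  0 < M -> `|x0| <= 1 -> f x0 = M -> dnorm f = M ->
  (forall s, 0 < s -> M <= dnorm (fun x => f x - s * g x)) -> g x0 <= 0.
Proof.
move=> UC hf hg M0 x01 fx0 dnf H.
rewrite leNgt; apply/negP => c0; set c := g x0 in c0.
have [G G0 HG] := dual_bounded hg.
set eps := Num.min 2 (c / (2 * (G + 1))).
have e1 : eps <= c / (2 * (G + 1)) by rewrite /eps ge_min lexx orbT.
have e2 : eps <= 2 by rewrite /eps ge_min lexx.
have eps0 : 0 < eps by rewrite /eps lt_min; apply/andP; split => //; apply: divr_gt0 => //; lra.
have [d d0 Hd] := UC eps (introT andP (conj eps0 e2)).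
set s := M * d / (c / 4 + G + 1).
have q0 : 0 < c / 4 + G + 1 by lra.
have s0 : 0 < s by rewrite /s divr_gt0 // mulr_gt0.
have sq : s * (c / 4 + G + 1) = M * d by rewrite /s divfK // gt_eqF.
have hfs := dual_combB _ _ s hf hg.
have sc0 : 0 < s * c / 4 by rewrite divr_gt0 // mulr_gt0.
have [x [x1 hx]] := dnorm_adh hfs sc0.
have Hs := H s s0.
have gxlb : - G <= g x.
  have := HG x; rewrite ler_norml => /andP[h _]; apply: le_trans h.
  by rewrite lerN2 -{2}(mulr1 G) ler_wpM2l.
have fxub : f x <= M.
  have := dnorm_ub x hf; rewrite dnf => h.
  apply: le_trans (ler_norm _) (le_trans h _); by rewrite -{2}(mulr1 M) ler_wpM2l // ltW.
have sg : - (s * G) <= s * g x by rewrite -mulrN ler_wpM2l // ltW.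
have fxlb : M * (1 - d) < f x.
  have : s * (c / 4) + s * G < M * d by rewrite -sq; nra.
  move: hx; rewrite -mulrA; nra.
have dist : `|x - x0| < eps.
  rewrite ltNge; apply/negP => /(Hd _ _ x1 x01) h.
  have := dnorm_ub (2^-1 *: (x + x0)) hf.
  rewrite dnf dualZ // dualD // fx0 => h2.
  have h3 : 2^-1 * (f x + M) <= M * (1 - d).
    apply: le_trans (ler_norm _) (le_trans h2 _); by rewrite ler_wpM2l // ltW.
  nra.
have hc : c - g x <= G * eps.
  have := HG (x0 - x); rewrite dualB // => h.
  apply: le_trans (ler_norm _) (le_trans h _); by rewrite distrC ler_wpM2l // ltW.
have Ge : G * eps <= c / 2.
  have : (G + 1) * eps <= (G + 1) * (c / (2 * (G + 1))) by rewrite ler_wpM2l //; lra.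
  have -> : (G + 1) * (c / (2 * (G + 1))) = c / 2 by field; lra.
  nra.
have : s * g x < s * (c / 4).
  move: hx; rewrite -mulrA; lra.
rewrite ltr_pM2l // => h; lra.
Qed.

Lemma key_orth (ps : R) (Jps : (V -> R) -> V) f g : uniformly_convex V -> 1 < ps ->
  dual_duality_map ps Jps -> is_dual f -> is_dual g ->
  (forall tau, dnorm f <= dnorm (fun x => f x - tau * g x)) -> g (Jps f) = 0.
Proof.
move=> UC ps1 HJ hf hg H; have [h1 h2] := HJ f hf.
set M := dnorm f in h1 h2 H.
have ps10 : ps - 1 != 0 by rewrite subr_eq0 gt_eqF.
have := dnorm_ge0 hf; rewrite -/M le_eqVlt => /orP[/eqP M0|M0].
  rewrite -M0 powR0 // in h2; move/normr0_eq0: h2 ->; exact: dual0.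
set a := M `^ (ps - 1).
have a0 : 0 < a by rewrite /a powR_gt0.
have hM : M `^ ps = a * M.
  rewrite -[in LHS](subrK 1 ps) powRD ?powRr1 ?(ltW M0) //; by apply/implyP => _; rewrite gt_eqF.
set x0 := a^-1 *: Jps f.
have x01 : `|x0| <= 1 by rewrite /x0 normrZ h2 -/a gtr0_norm ?invr_gt0 // mulVf ?gt_eqF.
have fx0 : f x0 = M by rewrite /x0 dualZ // h1 hM mulrA mulVf ?gt_eqF // mul1r.
have hng : is_dual (fun x => - g x).
  have := @dual_combB (fun _ => 0) g 1 _ hg.
  have -> : (fun x : V => 0 - 1 * g x) = (fun x => - g x) by apply: funext => x; rewrite mul1r sub0r.
  apply; split; [move=> *; ring | by move=> x; exact: cst_continuous].
have le1 : g x0 <= 0 by apply: (key_pos _ _ _ _ UC hf hg M0 x01 fx0) => // s _; exact: H.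
have le2 : - g x0 <= 0.
  apply: (key_pos _ _ _ _ UC hf hng M0 x01 fx0) => // s _.
  have -> : (fun x => f x - s * - g x) = (fun x => f x - (- s) * g x).
    by apply: funext => x; rewrite mulrN mulNr.
  exact: H.
have gx0 : g x0 = 0 by lra.
have -> : Jps f = a *: x0 by rewrite /x0 scalerA mulfV ?gt_eqF // scale1r.
by rewrite dualZ // gx0 mulr0.
Qed.

Lemma dual_sub f g : is_dual f -> is_dual g -> is_dual (fun x => f x - g x).
Proof.
move=> hf hg; have := dual_combB _ _ 1 hf hg.
by have -> : (fun x => f x - 1 * g x) = (fun x => f x - g x) by apply: funext => x; rewrite mul1r.
Qed.

Lemma powR_le_inv (a b q : R) : 0 < q -> 0 <= a -> 0 <= b -> a `^ q <= b `^ q -> a <= b.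
Proof.
move=> q0 a0 b0 h; rewrite leNgt; apply/negP => ba.
have := gt0_ltr_powR q0 b0 a0 ba; rewrite ltNge h //.
Qed.
End L.

Lemma dual_comp {R : realType} {U W : normedModType R} (B : U -> W) (h : W -> R) :
  bounded_linear B -> is_dual h -> is_dual (fun x => h (B x)).
Proof.
move=> [BL Bc] hh; split.
  by move=> a x z; rewrite BL hh.1.
move=> x; exact: (continuous_comp (Bc x) (hh.2 (B x))).
Qed.

Theorem mainTheorem3 (R : realType)
  (X Y : completeNormedModType R)
  (A : X -> Y) (y : Y) (p r : R) (N : nat)
  (Jp : X -> X -> R) (Jps : (X -> R) -> X) (JrY : Y -> Y -> R)
  (xs : nat -> X) (s t : nat -> nat -> R)
  (v : nat -> nat -> X -> R) (wst : nat -> nat -> Y -> R) :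
  smooth_space X -> uniformly_convex X ->
  bounded_linear A ->
  (exists xd : X, A xd = y) ->
  1 < p -> 1 < r -> (0 < N)%N ->
  let ps := p / (p - 1) in
  duality_selection p Jp ->
  dual_duality_map ps Jps ->
  duality_selection r JrY ->
  (* J_p(x_0) lies in the closure of R(A^* ) in X^* *)
  (forall eps : R, 0 < eps ->
     exists2 eta : Y -> R, is_dual eta & dnorm (fun x => Jp (xs 0%N) x - eta (A x)) < eps) ->
  (* the iteration, as long as it has not stopped (w_m = A x_m - y <> 0 for m <= n) *)
  (forall n : nat, (forall m : nat, (m <= n)%N -> A (xs m) - y != 0) ->
     let w := A (xs n) - y in
     let u := fun x : X => JrY w (A x) in
     (* s_n minimizes s |-> || u_n - sum_{i=1}^{N_{n-1}} s_i v_{n-1,i} ||^{p*} *)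
     (forall s' : nat -> R,
        dnorm (fun x => u x - \sum_(1 <= i < (Nprev N n).+1) s n i * v n.-1 i x) `^ ps
        <= dnorm (fun x => u x - \sum_(1 <= i < (Nprev N n).+1) s' i * v n.-1 i x) `^ ps) /\
     (* new direction and its precursor *)
     v n (Nn N n) = (fun x => u x - \sum_(1 <= k < (Nprev N n).+1) s n k * v n.-1 k x) /\
     wst n (Nn N n) = (fun z => JrY w z - \sum_(1 <= k < (Nprev N n).+1) s n k * wst n.-1 k z) /\
     (* the first N_n - 1 entries are the last N_n - 1 entries of the previous list *)
     (forall k : nat, (1 <= k)%N -> (k < Nn N n)%N ->
        v n k = v n.-1 (k + ((Nprev N n).+1 - Nn N n)%N) /\
        wst n k = wst n.-1 (k + ((Nprev N n).+1 - Nn N n)%N)) /\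
     (* t_n minimizes h_n, with offsets beta_{n,k} = <w*_{n,k}, y> *)
     (forall t' : nat -> R,
        (ps^-1 * dnorm (fun x => Jp (xs n) x
                          - \sum_(1 <= k < (Nn N n).+1) t n k * v n k x) `^ ps
         + \sum_(1 <= k < (Nn N n).+1) t n k * wst n k y)
        <= (ps^-1 * dnorm (fun x => Jp (xs n) x
                          - \sum_(1 <= k < (Nn N n).+1) t' k * v n k x) `^ ps
         + \sum_(1 <= k < (Nn N n).+1) t' k * wst n k y)) /\
     xs n.+1 = Jps (fun x => Jp (xs n) x - \sum_(1 <= k < (Nn N n).+1) t n k * v n k x)) ->
  forall n : nat, (forall m : nat, (m <= n)%N -> A (xs m) - y != 0) ->
  forall j k : nat, (1 <= j)%N -> (j < k)%N -> (k <= Nn N n)%N ->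
    v n j (Jps (v n k)) = 0.
Proof.
move=> smX UC Alin exy p1 r1 N0 ps HJp HJps HJr Hx0 Hit.
have ps1 : 1 < ps by rewrite /ps ltr_pdivlMr ?subr_gt0 // mul1r; lra.
have ps0 : 0 < ps by lra.
suff Q : forall n, (forall m : nat, (m <= n)%N -> A (xs m) - y != 0) ->
   (forall k, (1 <= k)%N -> (k <= Nn N n)%N -> is_dual (v n k)) /\
   (forall j k : nat, (1 <= j)%N -> (j < k)%N -> (k <= Nn N n)%N -> v n j (Jps (v n k)) = 0).
  by move=> n Hn; have [_ ] := Q n Hn.
have step : forall n, (forall m : nat, (m <= n)%N -> A (xs m) - y != 0) ->
   (forall i, (1 <= i)%N -> (i <= Nprev N n)%N -> is_dual (v n.-1 i)) ->
   (forall j k : nat, (1 <= j)%N -> (j < k)%N -> (k <= Nprev N n)%N -> v n.-1 j (Jps (v n.-1 k)) = 0) ->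
   (forall k, (1 <= k)%N -> (k <= Nn N n)%N -> is_dual (v n k)) /\
   (forall j k : nat, (1 <= j)%N -> (j < k)%N -> (k <= Nn N n)%N -> v n j (Jps (v n k)) = 0).
  move=> n Hnz DP OP.
  have le : (Nn N n <= (Nprev N n).+1)%N by case: (n) => [|n0] /=; rewrite /Nn; lia.
  have [Hs [Hv [Hw [Hsh [Ht Hx]]]]] := Hit n Hnz.
  clear Hw Ht Hx.
  have hu : is_dual (fun x => JrY (A (xs n) - y) (A x)) := dual_comp _ _ Alin (HJr _).1.
  have hS : is_dual (fun x => \sum_(1 <= k < (Nprev N n).+1) s n k * v n.-1 k x).
    apply: dual_sum => i; rewrite mem_index_iota => /andP[i1 i2]; apply: DP; lia.
  have hN : is_dual (v n (Nn N n)) by rewrite Hv; exact: dual_sub hu hS.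
  have hD : forall k, (1 <= k)%N -> (k <= Nn N n)%N -> is_dual (v n k).
    move=> k k1 kN; case: (ltngtP k (Nn N n)) => [kl|kg|->]; last exact: hN; last lia.
    rewrite (Hsh k k1 kl).1; apply: DP; lia.
  have orth : forall i, (1 <= i)%N -> (i <= Nprev N n)%N -> v n.-1 i (Jps (v n (Nn N n))) = 0.
    move=> i i1 iN; apply: (key_orth _ _ _ _ UC ps1 HJps hN (DP i i1 iN)) => tau.
    have := Hs (fun k => s n k + (if k == i then tau else 0)).
    rewrite -Hv.
    have -> : (fun x => JrY (A (xs n) - y) (A x) - \sum_(1 <= k < (Nprev N n).+1)
         (s n k + (if k == i then tau else 0)) * v n.-1 k x)
       = (fun x => v n (Nn N n) x - tau * v n.-1 i x).
      apply: funext => x; rewrite Hv.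
      under eq_bigr do rewrite mulrDl.
      rewrite big_split /= opprD addrA; congr (_ - _).
      rewrite (bigD1_seq i) ?iota_uniq ?mem_index_iota //=; last lia.
      rewrite eqxx big1 ?addr0 // => k /negPf ->; by rewrite mul0r.
    apply: powR_le_inv => //; apply: dnorm_ge0 => //; exact: dual_combB hN (DP i i1 iN).
  split; first exact: hD.
  move=> j k j1 jk kN.
  case: (ltngtP k (Nn N n)) => [kl|kg|ke]; last 2 first.
  - lia.
  - subst k; rewrite (Hsh j j1 jk).1; apply: orth; lia.
  have k1 : (0 < k)%N by lia.
  rewrite (Hsh j j1 (ltn_trans jk kl)).1 (Hsh k k1 kl).1.
  apply: OP; lia.
elim=> [|n' IH] Hnz.
  apply: step => //; first by move=> i i1 iN; rewrite /Nprev in iN; lia.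
  by move=> j k j1 jk kN; rewrite /Nprev in kN; lia.
have [D O] := IH (fun m hm => Hnz m (leqW hm)).
apply: step => //.
Qed.
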